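(* Let $(R,\mathfrak m)$ be a complete Noetherian local ring and let $\Omega$ be an inverse poset. Let $\{p'_j\mid j\in\Omega\}$ be pair operations defined on the class of all pairs $(L,M)$ of Matlis-dualizable $R$-modules with $L\subseteq M$, such that $p'_i\le p'_j$ whenever $i\le j$, and let $p'=\varprojlim_{j\in\Omega}p'_j$, i.e. $p'(L,M)=\bigcap_{j\in\Omega}p'_j(L,M)$. If every $p'_j$ is cohereditary, then so is $p'$.
   Context: With $E$ the injective hull of the residue field and $(-)^\vee=\operatorname{Hom}_R(-,E)$, $M$ is Matlis-dualizable if the natural map $M\to M^{\vee\vee}$ is an isomorphism. A pair operation assigns to each pair $(L,M)$ a submodule $p(L,M)\subseteq M$ with $\phi(p(L,M))=p(\phi(L),M')$ for every isomorphism $\phi:M\to M'$. $p\le p'$ means $p(L,M)\subseteq p'(L,M)$ for all pairs. An inverse poset is a poset $\Omega$ such that any two elements have a common lower bound. $p$ is cohereditary if $p(N/L,M/L)=(p(N,M)+L)/L$ whenever $L\subseteq N\subseteq M$. *)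

(* Defs.v *)
From HB Require Import structures.
From mathcomp Require Import all_boot all_order all_algebra.
Set Implicit Arguments. Unset Strict Implicit. Unset Printing Implicit Defensive.
Import Order.TTheory GRing.Theory.
Local Open Scope ring_scope.

Section CommAlg.
Variable R : comNzRingType.

Definition ideal (I : R -> Prop) : Prop :=
  [/\ I 0, (forall x y, I x -> I y -> I (x + y)) & (forall r x, I x -> I (r * x))].

Definition maximal_ideal (m : R -> Prop) : Prop :=
  [/\ ideal m, ~ m 1 &
      forall J, ideal J -> (forall x, m x -> J x) -> ~ J 1 -> forall x, J x -> m x].

Definition local_ring (m : R -> Prop) : Prop :=
  maximal_ideal m /\ forall n, maximal_ideal n -> forall x, n x <-> m x.

Definition noetherian_ring : Prop :=
  forall I : nat -> R -> Prop, (forall n, ideal (I n)) ->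
    (forall n x, I n x -> I n.+1 x) ->
    exists N, forall n, (N <= n)%N -> forall x, I n x <-> I N x.

Fixpoint idpow (m : R -> Prop) (n : nat) : R -> Prop :=
  match n with
  | 0 => fun _ => True
  | n'.+1 => fun x => exists s : seq (R * R),
      (forall q, q \in s -> m q.1 /\ idpow m n' q.2) /\
      x = \sum_(q <- s) q.1 * q.2
  end.

Definition madic_complete (m : R -> Prop) : Prop :=
  (forall x, (forall n, idpow m n x) -> x = 0) /\
  (forall u : nat -> R,
      (forall n, exists N, forall i j, (N <= i)%N -> (N <= j)%N ->
         idpow m n (u i - u j)) ->
      exists y, forall n, exists N, forall i, (N <= i)%N -> idpow m n (y - u i)).

Definition lin (M N : lmodType R) (f : M -> N) : Prop :=
  forall (r : R) (x y : M), f (r *: x + y) = r *: f x + f y.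

Definition submod (M : lmodType R) (L : M -> Prop) : Prop :=
  [/\ L 0, (forall x y, L x -> L y -> L (x + y)) & (forall r x, L x -> L (r *: x))].

Definition subset_of (M : lmodType R) (A B : M -> Prop) : Prop :=
  forall x, A x -> B x.

Definition image_of (M N : lmodType R) (f : M -> N) (A : M -> Prop) : N -> Prop :=
  fun y => exists2 x, A x & f x = y.

(* E is an injective hull of the residue field R/m: E is injective, and E is an
   essential extension of a copy R e of R/m (ann e = m). *)
Definition injective_module (E : lmodType R) : Prop :=
  forall (A B : lmodType R) (i : A -> B) (g : A -> E),
    lin i -> injective i -> lin g ->
    exists h : B -> E, lin h /\ forall a, h (i a) = g a.

Definition injective_hull_residue_field (m : R -> Prop) (E : lmodType R) : Prop :=
  injective_module E /\
  exists e : E,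
    (forall r : R, r *: e = 0 <-> m r) /\
    (forall N : E -> Prop, submod N -> (exists2 y, N y & y <> 0) ->
       exists y, [/\ N y, y <> 0 & exists r : R, y = r *: e]).

(* Matlis-dualizable: the natural map M -> M^{vv} = Hom(Hom(M,E),E),
   x |-> (f |-> f x), is an isomorphism (i.e. a bijection, being linear).
   Elements of M^v are the linear maps M -> E, with pointwise operations;
   elements of M^{vv} are the R-linear maps Phi on M^v. *)
Definition matlis_dualizable (E M : lmodType R) : Prop :=
  (forall x y : M, (forall f : M -> E, lin f -> f x = f y) -> x = y) /\
  (forall Phi : (M -> E) -> E,
     (forall (r : R) (f g : M -> E), lin f -> lin g ->
        Phi (fun x => r *: f x + g x) = r *: Phi f + Phi g) ->
     exists x : M, forall f : M -> E, lin f -> Phi f = f x).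

(* p M L stands for p(L, M). *)
Definition pairop_t := forall M : lmodType R, (M -> Prop) -> (M -> Prop).

Definition is_pair_operation (E : lmodType R) (p : pairop_t) : Prop :=
  (forall (M : lmodType R) (L : M -> Prop),
     matlis_dualizable E M -> submod L -> submod (p M L)) /\
  (forall (M M' : lmodType R) (phi : M -> M') (L : M -> Prop),
     matlis_dualizable E M -> matlis_dualizable E M' -> submod L ->
     lin phi -> bijective phi ->
     forall y, image_of phi (p M L) y <-> p M' (image_of phi L) y).

Definition pairop_le (E : lmodType R) (p q : pairop_t) : Prop :=
  forall (M : lmodType R) (L : M -> Prop),
    matlis_dualizable E M -> submod L -> subset_of (p M L) (q M L).

(* Cohereditary: p(N/L, M/L) = (p(N,M)+L)/L for L <= N <= M.  The quotient
   M/L is represented by any surjective linear map f : M -> M'' with kernel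
   exactly L (pair operations are isomorphism invariant); then
   N/L = f(N) and (p(N,M)+L)/L = f(p(N,M)). *)
Definition cohereditary (E : lmodType R) (p : pairop_t) : Prop :=
  forall (M M'' : lmodType R) (L N : M -> Prop) (f : M -> M''),
    matlis_dualizable E M -> matlis_dualizable E M'' ->
    submod L -> submod N -> subset_of L N ->
    lin f -> (forall y : M'', exists x, f x = y) ->
    (forall x, f x = 0 <-> L x) ->
    forall y, p M'' (image_of f N) y <-> image_of f (p M N) y.

End CommAlg.

(* Main.v *)
Require Import Defs.
From HB Require Import structures.
From mathcomp Require Import all_boot all_order all_algebra.
From mathcomp Require Import boolp.
From Stdlib Require Import ProofIrrelevance.
Import Order.TTheory GRing.Theory.
Local Open Scope ring_scope.

Record subm (R : comNzRingType) (V : lmodType R) (S : V -> Prop) (HS : submod S) :=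
  Subm { sv : V; sp : S sv }.
Arguments subm {R V S} HS.
Arguments Subm {R V S HS}.
Arguments sv {R V S HS}.
Arguments sp {R V S HS}.

Lemma subm_eq R V S HS (a b : @subm R V S HS) : sv a = sv b -> a = b.
Proof. case: a b => [a pa] [b pb] /= e; subst b; f_equal; apply proof_irrelevance. Qed.

HB.instance Definition _ (R : comNzRingType) (V : lmodType R) (S : V -> Prop) (HS : submod S) := gen_eqMixin (@subm R V S HS).
HB.instance Definition _ (R : comNzRingType) (V : lmodType R) (S : V -> Prop) (HS : submod S) := gen_choiceMixin (@subm R V S HS).

Section Ops.
Variables (R : comNzRingType) (V : lmodType R) (S : V -> Prop) (HS : submod S).
Lemma S0 : S 0. Proof. by case: HS. Qed.
Lemma SD x y : S x -> S y -> S (x + y). Proof. by case: HS => _ h _; apply: h. Qed.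
Lemma SZ r x : S x -> S (r *: x). Proof. by case: HS => _ _ h; apply: h. Qed.
Lemma SN x : S x -> S (- x). Proof. by move=> h; rewrite -scaleN1r; apply: SZ. Qed.
Definition szero : subm HS := Subm 0 S0.
Definition sadd (a b : subm HS) : subm HS := Subm (sv a + sv b) (SD _ _ (sp a) (sp b)).
Definition sopp (a : subm HS) : subm HS := Subm (- sv a) (SN _ (sp a)).
Definition sscale (r : R) (a : subm HS) : subm HS := Subm (r *: sv a) (SZ r _ (sp a)).
End Ops.
Arguments szero {R V S} HS.
Arguments sadd {R V S HS}.
Arguments sopp {R V S HS}.
Arguments sscale {R V S HS}.

Section Inst.
Variables (R : comNzRingType) (V : lmodType R) (S : V -> Prop) (HS : submod S).
Lemma saddA : associative (@sadd R V S HS). Proof. by move=> *; apply: subm_eq; rewrite /= addrA. Qed.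
Lemma saddC : commutative (@sadd R V S HS). Proof. by move=> *; apply: subm_eq; rewrite /= addrC. Qed.
Lemma sadd0 : left_id (szero HS) (@sadd R V S HS). Proof. by move=> *; apply: subm_eq; rewrite /= add0r. Qed.
Lemma saddN : left_inverse (szero HS) (@sopp R V S HS) (@sadd R V S HS). Proof. by move=> *; apply: subm_eq; rewrite /= addNr. Qed.
End Inst.
HB.instance Definition _ (R : comNzRingType) (V : lmodType R) (S : V -> Prop) (HS : submod S) := GRing.isZmodule.Build (@subm R V S HS)
  (@saddA R V S HS) (@saddC R V S HS) (@sadd0 R V S HS) (@saddN R V S HS).
Section Inst2.
Variables (R : comNzRingType) (V : lmodType R) (S : V -> Prop) (HS : submod S).
Lemma sscaleA a b (v : subm HS) : sscale a (sscale b v) = sscale (a * b) v.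
Proof. by apply: subm_eq; rewrite /= scalerA. Qed.
Lemma sscale1 : left_id 1 (@sscale R V S HS). Proof. by move=> *; apply: subm_eq; rewrite /= scale1r. Qed.
Lemma sscaleDr : right_distributive (@sscale R V S HS) +%R.
Proof. by move=> *; apply: subm_eq; rewrite /= scalerDr. Qed.
Lemma sscaleDl (v : subm HS) : {morph sscale^~ v: a b / a + b}.
Proof. by move=> *; apply: subm_eq; rewrite /= scalerDl. Qed.
End Inst2.
HB.instance Definition _ (R : comNzRingType) (V : lmodType R) (S : V -> Prop) (HS : submod S) := GRing.Zmodule_isLmodule.Build R (@subm R V S HS)
  (@sscaleA R V S HS) (@sscale1 R V S HS) (@sscaleDr R V S HS) (@sscaleDl R V S HS).

Lemma sv_lin R V S HS : lin (@sv R V S HS). Proof. by []. Qed.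
Lemma sv_inj R V S HS : injective (@sv R V S HS). Proof. exact: subm_eq. Qed.

Definition fn (R : comNzRingType) (M E : lmodType R) := M -> E.
Arguments fn {R} M E.
HB.instance Definition _ (R : comNzRingType) (M E : lmodType R) := gen_eqMixin (fn M E).
HB.instance Definition _ (R : comNzRingType) (M E : lmodType R) := gen_choiceMixin (fn M E).
Section Fn.
Variables (R : comNzRingType) (M E : lmodType R).
Definition fzero : fn M E := fun _ => 0.
Definition fadd (f g : fn M E) : fn M E := fun x => f x + g x.
Definition fopp (f : fn M E) : fn M E := fun x => - f x.
Definition fscale (r : R) (f : fn M E) : fn M E := fun x => r *: f x.
Lemma faddA : associative fadd. Proof. by move=> *; apply: funext => x; rewrite /fadd addrA. Qed.
Lemma faddC : commutative fadd. Proof. by move=> *; apply: funext => x; rewrite /fadd addrC. Qed.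
Lemma fadd0 : left_id fzero fadd. Proof. by move=> *; apply: funext => x; rewrite /fadd /fzero add0r. Qed.
Lemma faddN : left_inverse fzero fopp fadd. Proof. by move=> *; apply: funext => x; rewrite /fadd /fopp addNr. Qed.
End Fn.
Arguments fzero {R M E}.
Arguments fadd {R M E}.
Arguments fopp {R M E}.
Arguments fscale {R M E}.
HB.instance Definition _ (R : comNzRingType) (M E : lmodType R) := GRing.isZmodule.Build (fn M E)
  (@faddA R M E) (@faddC R M E) (@fadd0 R M E) (@faddN R M E).
Section Fn2.
Variables (R : comNzRingType) (M E : lmodType R).
Lemma fscaleA a b (v : fn M E) : fscale a (fscale b v) = fscale (a * b) v.
Proof. by apply: funext => x; rewrite /fscale scalerA. Qed.
Lemma fscale1 : left_id 1 (@fscale R M E). Proof. by move=> *; apply: funext => x; rewrite /fscale scale1r. Qed.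
Lemma fscaleDr : right_distributive (@fscale R M E) +%R.
Proof. by move=> *; apply: funext => x; rewrite /fscale /= /fadd scalerDr. Qed.
Lemma fscaleDl (v : fn M E) : {morph fscale^~ v: a b / a + b}.
Proof. by move=> *; apply: funext => x; rewrite /fscale /= /fadd scalerDl. Qed.
End Fn2.
HB.instance Definition _ (R : comNzRingType) (M E : lmodType R) := GRing.Zmodule_isLmodule.Build R (fn M E)
  (@fscaleA R M E) (@fscale1 R M E) (@fscaleDr R M E) (@fscaleDl R M E).

Lemma fn_comb (R : comNzRingType) (M E : lmodType R) r (f g : fn M E) : r *: f + g = (fun x => r *: f x + g x).
Proof. by []. Qed.

From Stdlib Require Import Classical ClassicalEpsilon.

Lemma fnD (R : comNzRingType) (M E : lmodType R) (f g : fn M E) v : (f + g) v = f v + g v.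
Proof. by []. Qed.
Lemma fnZ (R : comNzRingType) (M E : lmodType R) r (f : fn M E) v : (r *: f) v = r *: f v.
Proof. by []. Qed.
Lemma fn0 (R : comNzRingType) (M E : lmodType R) v : (0 : fn M E) v = 0.
Proof. by []. Qed.

Section Lin.
Variables (R : comNzRingType) (M N : lmodType R) (f : M -> N) (lf : lin f).
Lemma lin0 : f 0 = 0.
Proof. have := lf 1 0 0; rewrite scaler0 addr0 scale1r => h.
by apply: (addrI (f 0)); rewrite addr0 -h. Qed.
Lemma linD a b : f (a + b) = f a + f b.
Proof. by have := lf 1 a b; rewrite !scale1r. Qed.
Lemma linZ r a : f (r *: a) = r *: f a.
Proof. by have := lf r a 0; rewrite !addr0 lin0 addr0. Qed.
Lemma linB a b : f (a - b) = f a - f b.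
Proof. by rewrite linD -scaleN1r linZ scaleN1r. Qed.
End Lin.
Arguments lin0 {R M N f}.
Arguments linD {R M N f}.
Arguments linZ {R M N f}.
Arguments linB {R M N f}.

Lemma ideal_in_m (R : comNzRingType) (m : R -> Prop) (Hloc : local_ring m)
  (Hn : noetherian_ring R) (I : R -> Prop) :
  ideal I -> ~ I 1 -> forall x, I x -> m x.
Proof.
move=> HI HI1.
suff [n [Hn1 Hn2]] : exists n, maximal_ideal n /\ forall x, I x -> n x.
  by move=> x /Hn2 /((Hloc.2 n Hn1 x).1).
apply: NNPP => Hno.
pose T := {J : R -> Prop | [/\ ideal J, ~ J 1 & forall x, I x -> J x]}.
have step : forall J : T, exists J' : T,
    (forall x, sval J x -> sval J' x) /\ exists x, sval J' x /\ ~ sval J x.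
  move=> [J [J1 J2 J3]] /=.
  apply: NNPP => Hs; apply: Hno; exists J; split => //.
  split => // J' HJ' sub HJ'1 x HJx; apply: NNPP => nJx.
  apply: Hs; exists (exist _ J' (And3 HJ' HJ'1 (fun y Iy => sub y (J3 y Iy)))).
  by split => //; exists x.
pose st := fun J : T => proj1_sig (constructive_indefinite_description _ (step J)).
have stP : forall J : T, (forall x, sval J x -> sval (st J) x) /\
    exists x, sval (st J) x /\ ~ sval J x.
  by move=> J; rewrite /st; case: constructive_indefinite_description.
pose I0 : T := exist _ I (And3 HI HI1 (fun y Iy => Iy)).
pose ch := fun n => iter n st I0.
have chI : forall n, ideal (sval (ch n)) by move=> n; case: (ch n) => J [].
have [N HN] := Hn (fun n => sval (ch n)) chI (fun n x => (stP (ch n)).1 x).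
have [x [x1 x2]] := (stP (ch N)).2.
by apply: x2; apply/(HN N.+1 (leqnSn N) x).
Qed.

Lemma cogen (R : comNzRingType) (m : R -> Prop) (Hloc : local_ring m)
  (Hn : noetherian_ring R) (E : lmodType R) (HE : injective_hull_residue_field m E)
  (M : lmodType R) (K : M -> Prop) (HK : submod K) (z : M) :
  ~ K z -> exists f : M -> E, [/\ lin f, (forall k, K k -> f k = 0) & f z <> 0].
Proof.
move=> Kz.
case: HE => Einj [e [He _]].
case: HK => K0 KD KZ.
pose I := fun r : R => K (r *: z).
have HI : ideal I.
  split; rewrite /I.
  - by rewrite scale0r.
  - by move=> x y hx hy; rewrite scalerDl; apply: KD.
  - by move=> r x hx; rewrite -scalerA; apply: KZ.
have HI1 : ~ I 1 by rewrite /I scale1r.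
have Im := @ideal_in_m _ _ Hloc Hn _ HI HI1.
pose S := fun v : M => exists p : M * R, K p.1 /\ v = p.1 + p.2 *: z.
have HS : submod S.
  split.
  - by exists (0, 0); rewrite /= scale0r addr0.
  - move=> x y [[k r] /= [hk ->]] [[k' r'] /= [hk' ->]].
    exists (k + k', r + r') => /=; split; first exact: KD.
    by rewrite scalerDl addrACA.
  - move=> a x [[k r] /= [hk ->]]; exists (a *: k, a * r) => /=; split; first exact: KZ.
    by rewrite scalerDr scalerA.
have wd : forall k r k' r', K k -> K k' -> k + r *: z = k' + r' *: z -> r *: e = r' *: e.
  move=> k r k' r' hk hk' eq.
  have : I (r - r').
    rewrite /I scalerBl.
    have -> : r *: z - r' *: z = k' - k.
      rewrite (_ : k' = k + (r *: z - r' *: z)); last by rewrite addrA eq addrK.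
      by rewrite [k + _]addrC addrK.

    by apply: KD => //; rewrite -scaleN1r; apply: KZ.
  move/Im/He; rewrite scalerBl => /eqP; rewrite subr_eq0 => /eqP //.
pose g := fun v : subm HS => let p := sval (constructive_indefinite_description _ (sp v)) in p.2 *: e.
have gP : forall v k r, K k -> sv v = k + r *: z -> g v = r *: e.
  move=> v k r hk hv; rewrite /g; case: constructive_indefinite_description => [[k' r'] /= [hk' hv']].
  by apply: (wd k' r' k r) => //; rewrite -hv' -hv.
have lg : lin g.
  move=> a u w; have [[k r] /= [hk hv]] := sp u; have [[k' r'] /= [hk' hv']] := sp w.
  rewrite (gP u k r hk hv) (gP w k' r' hk' hv') (gP _ (a *: k + k') (a * r + r')).
  - by rewrite scalerDl scalerA.
  - by apply: KD => //; apply: KZ.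
  - by rewrite /= /sadd /sscale /= hv hv' scalerDl scalerDr -scalerA addrACA.
have [h [lh hh]] := Einj _ _ (@sv R M S HS) g (@sv_lin R M S HS) (@sv_inj R M S HS) lg.
exists h; split => //.
  move=> k hk.
  have Sk : S k by exists (k, 0); rewrite /= scale0r addr0.
  rewrite -[k]/(sv (Subm k Sk : subm HS)) hh (gP _ k 0) // ?scale0r //.
  by rewrite /= addr0.
have Sz : S z by exists (0, 1); rewrite /= scale1r add0r.
rewrite -[z]/(sv (Subm z Sz : subm HS)) hh (gP _ 0 1) //= ?scale1r ?add0r //.
move=> e0; have : m 1 by apply/He; rewrite scale1r.
by case: Hloc => [[_ Hm1 _] _].
Qed.

Lemma lincomp (R : comNzRingType) (E M : lmodType R) (Einj : injective_module E)
  (HM : matlis_dualizable E M)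
  (cog : forall K : M -> Prop, submod K -> forall z, ~ K z ->
     exists f : M -> E, [/\ lin f, (forall k, K k -> f k = 0) & f z <> 0])
  (J : Type) (j0 : J) (x : J -> M) (K : J -> M -> Prop) (HK : forall j, submod (K j))
  (dir : forall j k, exists l, [/\ forall v, K l v -> K j v, forall v, K l v -> K k v,
          K j (x l - x j) & K k (x l - x k)]) :
  exists x0, forall j, K j (x0 - x j).
Proof.
pose U := fun phi : fn M E => lin phi /\ exists j, forall v, K j v -> phi v = 0.
have wd : forall phi : fn M E, lin phi -> forall j k, (forall v, K j v -> phi v = 0) ->
    (forall v, K k v -> phi v = 0) -> phi (x j) = phi (x k).
  move=> phi lp j k hj hk; have [l [_ _ h1 h2]] := dir j k.
  have := hj _ h1; have := hk _ h2; rewrite !(linB lp) => /eqP; rewrite subr_eq0 => /eqP <-.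
  by move/eqP; rewrite subr_eq0 => /eqP.
have HU : submod U.
  split.
  - split; first by move=> r a b; rewrite !fn0 scaler0 addr0.
    by exists j0.
  - move=> f g [lf [j hj]] [lg [k hk]]; split.
      by move=> r a b; rewrite !fnD (lf r a b) (lg r a b) scalerDr addrACA.
    have [l [hl1 hl2 _ _]] := dir j k; exists l => v hv.
    by rewrite fnD hj ?hk ?addr0 //; [apply: hl2 | apply: hl1].
  - move=> r f [lf [j hj]]; split.
      by move=> a b c; rewrite !fnZ (lf a b c) scalerDr !scalerA mulrC.
    by exists j => v hv; rewrite fnZ hj ?scaler0.
pose g := fun u : subm HU =>
  (sv u : M -> E) (x (sval (constructive_indefinite_description _ (proj2 (sp u))))).
have gP : forall (u : subm HU) j, (forall v, K j v -> (sv u : M -> E) v = 0) -> g u = (sv u : M -> E) (x j).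
  move=> u j hj; rewrite /g; case: constructive_indefinite_description => k hk /=.
  by apply: wd => //; case: (sp u).
have lg : lin g.
  move=> a u w; have [lu [j hj]] := sp u; have [lw [k hk]] := sp w.
  have [l [hl1 hl2 _ _]] := dir j k.
  rewrite (gP u l) ?(gP w l) ?(gP _ l) //.
  - by move=> v hv; rewrite /= fnD fnZ hj ?hk ?scaler0 ?addr0 //; [apply: hl2 | apply: hl1].
  - by move=> v hv; apply: hk; apply: hl2.
  - by move=> v hv; apply: hj; apply: hl1.
have [h [lh hh]] := Einj _ _ (@sv R (fn M E) U HU) g (@sv_lin R (fn M E) U HU)
   (@sv_inj R (fn M E) U HU) lg.
have [x0 Hx0] := HM.2 h (fun r f g _ _ => lh r f g).
exists x0 => j; apply: NNPP => nK.
have [f [lf fK fz]] := cog _ (HK j) _ nK.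
have Uf : U f by split => //; exists j.
have e := hh (@Subm _ (fn M E) U HU f Uf); rewrite (gP _ j) // in e.
rewrite /= Hx0 // in e.
by apply: fz; rewrite (linB lf) e subrr.
Qed.

Local Close Scope ring_scope.

Theorem corollary6p10
  (R : comNzRingType) (m : R -> Prop)
  (Hloc : local_ring m) (Hnoeth : noetherian_ring R) (Hcompl : madic_complete m)
  (E : lmodType R) (HE : injective_hull_residue_field m E)
  (disp : Order.disp_t) (Omega : porderType disp)
  (HOmega : forall i j : Omega, exists k : Omega, (k <= i)%O /\ (k <= j)%O)
  (p : Omega -> pairop_t R)
  (Hp : forall j, is_pair_operation E (p j))
  (Hmono : forall i j : Omega, (i <= j)%O -> pairop_le E (p i) (p j))
  (Hcoher : forall j, cohereditary E (p j)) :
  cohereditary E (fun (M : lmodType R) (L : M -> Prop) (x : M) => forall j, p j M L x).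
Proof.
move=> M M'' L N f dM dM'' HL HN HLN lf surj ker y; split; last first.
  case=> x0 hx0 <- j; apply/(Hcoher j M M'' L N f) => //; exists x0 => //; exact: hx0.
move=> Hy.
have ex : forall j, exists x, p j M N x /\ f x = y.
  move=> j; have [x hx fx] := (Hcoher j M M'' L N f dM dM'' HL HN HLN lf surj ker y).1 (Hy j).
  by exists x.
case: (classic (exists j : Omega, True)) => [[j0 _]|no]; last first.
  have [x fx] := surj y; exists x => // j; case: no; by exists j.
pose xj := fun j => sval (constructive_indefinite_description _ (ex j)).
have xjP : forall j, p j M N (xj j) /\ f (xj j) = y.
  by move=> j; rewrite /xj; case: constructive_indefinite_description.
pose K := fun j v => p j M N v /\ L v.
have HP : forall j, submod (p j M N) by move=> j; apply: (Hp j).1.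
have HK : forall j, submod (K j).
  move=> j; case: (HP j) => P0 PD PZ; case: HL => L0 LD LZ; split.
  - by split.
  - by move=> a b [] ? ? [] ? ?; split; [apply: PD | apply: LD].
  - by move=> r a [] ? ?; split; [apply: PZ | apply: LZ].
have PB : forall j a b, p j M N a -> p j M N b -> p j M N (a - b)%R.
  move=> j a b ha hb; case: (HP j) => _ PD PZ; apply: PD => //.
  by rewrite -GRing.scaleN1r; apply: PZ.
have sub : forall l j, (l <= j)%O -> forall v, K l v -> K j v.
  by move=> l j hlj v [h1 h2]; split => //; apply: (Hmono l j hlj M N dM HN).
have inK : forall l j, (l <= j)%O -> K j (xj l - xj j)%R.
  move=> l j hlj; split.
    apply: PB; last exact: (xjP j).1.
    by apply: (Hmono l j hlj M N dM HN); exact: (xjP l).1.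
  by apply/ker; rewrite (linB lf) (xjP l).2 (xjP j).2 GRing.subrr.
have dir : forall j k, exists l, [/\ forall v, K l v -> K j v, forall v, K l v -> K k v,
          K j (xj l - xj j)%R & K k (xj l - xj k)%R].
  move=> j k; have [l [hj hk]] := HOmega j k.
  by exists l; split; [apply: sub | apply: sub | apply: inK | apply: inK].
have cog := @cogen R m Hloc Hnoeth E HE M.
have [x0 Hx0] := @lincomp R E M HE.1 dM cog Omega j0 xj K HK dir.
exists x0.
  move=> j; have [h1 _] := Hx0 j.
  have := (HP j); case=> _ PD _.
  by rewrite -(GRing.subrK (xj j) x0); apply: PD => //; exact: (xjP j).1.
have [_ h2] := Hx0 j0.
have := (ker (x0 - xj j0)%R).2 h2; rewrite (linB lf) (xjP j0).2.
by move/eqP; rewrite GRing.subr_eq0 => /eqP.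
Qed.
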